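(* There is a regular language $L$ over some finite alphabet $\Sigma$ and a replacement query $\rho$ such that $(q_L,\Delta_\Sigma)$ can be maintained in DynFO by a program all of whose auxiliary relations are nullary, but $(q_L,\Delta_\Sigma\cup\{\rho\})$ cannot be maintained in DynFO by any program all of whose auxiliary relations are nullary.
   Context: Framework. A replacement rule for a relation symbol $R$ is $R := \mu_R(\bar p;\bar x)$ with $\mu_R$ first-order; a replacement query $\rho(\bar p)$ is a set of such rules for distinct relations with a common parameter tuple $\bar p$. A change $\rho(\bar a)$ replaces each ruled relation $R$ by $\{\bar b:\mathcal D\models\mu_R(\bar a;\bar b)\}$. $\Delta_\Sigma$ is the set of single-tuple insertions $R_\sigma:=R_\sigma(x)\lor x=p$ and deletions $R_\sigma:=R_\sigma(x)\land\neg(x=p)$ for $\sigma\in\Sigma$. A dynamic program operates on states of an input database and an auxiliary database over a fixed finite domain; for each allowed replacement query $\rho(\bar p)$ and auxiliary symbol $T$ it has an update formula $\varphi_T(\bar p;\bar x)$ over input and auxiliary schema, and after change $\rho(\bar a)$ the input is replaced by its image and $T$ becomes $\{\bar b:\text{old state}\models\varphi_T(\bar a,\bar b)\}$. It maintains $(q,\Delta)$ if an auxiliary relation $Q$ equals $q$ of the current input after every nonempty sequence of changes from $\Delta$ starting from the empty input and empty auxiliary database. DynFO: first-order update formulas. Strings: a word over $\Sigma$ is represented by a database with domain $\{1,\dots,n\}$, the natural linear order $<$, constants $\min=1$, $\max=n$, and one unary relation $R_\sigma$ per $\sigma\in\Sigma$, each element being in at most one $R_\sigma$; position $i$ carries $\sigma$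 if $i\in R_\sigma$ and $\epsilon$ otherwise, and the database represents the concatenation of these. Changes never modify $<,\min,\max$ and keep each position in at most one $R_\sigma$. $q_L$ is the Boolean query true iff the represented word is in $L$. *)

(* Defs.v *)
From mathcomp Require Import all_boot.
Set Implicit Arguments. Unset Strict Implicit. Unset Printing Implicit Defensive.

Record dfa (Sigma : finType) := DFA {
  dfa_state : finType;
  dfa_start : dfa_state;
  dfa_final : pred dfa_state;
  dfa_trans : dfa_state -> Sigma -> dfa_state }.

Definition dfa_accepts (Sigma : finType) (M : dfa Sigma) (w : seq Sigma) : bool :=
  @dfa_final _ M (foldl (@dfa_trans _ M) (@dfa_start _ M) w).

Definition regular (Sigma : finType) (L : seq Sigma -> bool) : Prop :=
  exists M : dfa Sigma, forall w, L w = dfa_accepts M w.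

Inductive term := TVar of nat | TMin | TMax.

Inductive formula (Sigma : Type) (A : Type) :=
| FTrue
| FEq of term & term
| FLt of term & term
| FIn of Sigma & term
| FAux of A & seq term
| FNot of formula Sigma A
| FAnd of formula Sigma A & formula Sigma A
| FOr of formula Sigma A & formula Sigma A
| FExists of nat & formula Sigma A
| FForall of nat & formula Sigma A.

Arguments FTrue {Sigma A}.
Arguments FEq {Sigma A}.
Arguments FLt {Sigma A}.
Arguments FIn {Sigma A}.
Arguments FAux {Sigma A}.
Arguments FNot {Sigma A}.
Arguments FAnd {Sigma A}.
Arguments FOr {Sigma A}.
Arguments FExists {Sigma A}.
Arguments FForall {Sigma A}.

Section Semantics.
Variables (n : nat) (Sigma : finType) (A : Type).
Local Notation D := 'I_n.+1.

(* input database: the relations R_sigma (order and constants are fixed) *)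
Definition instate := Sigma -> D -> bool.
Definition auxstate := A -> seq D -> bool.

Definition eval_term (env : nat -> D) (t : term) : D :=
  match t with TVar i => env i | TMin => ord0 | TMax => ord_max end.

Definition upd_env (env : nat -> D) (i : nat) (d : D) : nat -> D :=
  fun j => if j == i then d else env j.

Fixpoint eval (I : instate) (X : auxstate) (f : formula Sigma A) (env : nat -> D)
  : bool :=
  match f with
  | FTrue => true
  | FEq t1 t2 => eval_term env t1 == eval_term env t2
  | FLt t1 t2 => (nat_of_ord (eval_term env t1) < nat_of_ord (eval_term env t2))%N
  | FIn s t => I s (eval_term env t)
  | FAux a ts => X a (map (eval_term env) ts)
  | FNot g => ~~ eval I X g env
  | FAnd g h => eval I X g env && eval I X h env
  | FOr g h => eval I X g env || eval I X h env
  | FExists i g => [exists d : D, eval I X g (upd_env env i d)]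
  | FForall i g => [forall d : D, eval I X g (upd_env env i d)]
  end.

Definition env_of (ps : seq D) : nat -> D := fun i => nth ord0 ps i.

End Semantics.

(* A replacement query rho(p_1..p_k): for each input relation R_sigma at most
   one rule R_sigma := mu(p; x), mu first order over the input schema.
   Parameters p_1..p_k are variables 0..k-1, x is variable k. *)
Record rquery (Sigma : finType) := RQuery {
  rq_arity : nat;
  rq_rule : Sigma -> option (formula Sigma Empty_set) }.

Definition noaux (n : nat) : Empty_set -> seq 'I_n.+1 -> bool := fun _ _ => false.

Definition apply_rquery (n : nat) (Sigma : finType) (rho : rquery Sigma)
  (ps : seq 'I_n.+1) (I : instate n Sigma) : instate n Sigma :=
  fun s d => match rq_rule rho s with
             | Some mu => eval I (@noaux n) mu (env_of (ps ++ [:: d]))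
             | None => I s d
             end.

Definition valid_string (n : nat) (Sigma : finType) (I : instate n Sigma) : bool :=
  [forall d : 'I_n.+1, forall s : Sigma, forall t : Sigma, I s d ==> I t d ==> (s == t)].

Definition word_of (n : nat) (Sigma : finType) (I : instate n Sigma) : seq Sigma :=
  flatten [seq [seq s <- enum Sigma | I s i] | i <- enum 'I_n.+1].

Definition string_preserving (Sigma : finType) (rho : rquery Sigma) : Prop :=
  forall n (I : instate n Sigma) (ps : seq 'I_n.+1),
    size ps = rq_arity rho -> valid_string I -> valid_string (apply_rquery rho ps I).

Definition delta_sigma (Sigma : finType) (c : Sigma * bool) : rquery Sigma :=
  let: (s, ins) := c in
  @RQuery Sigma 1 (fun t => if t == s then
    Some (if ins then FOr (FIn s (TVar 1)) (FEq (TVar 1) (TVar 0))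
          else FAnd (FIn s (TVar 1)) (FNot (FEq (TVar 1) (TVar 0))))
    else None).

Definition delta_sigma_plus (Sigma : finType) (rho : rquery Sigma)
  (c : option (Sigma * bool)) : rquery Sigma :=
  match c with Some c' => delta_sigma c' | None => rho end.

(* For change c with k parameters and aux symbol T of arity m, the update
   formula upd c T has parameters in variables 0..k-1 and x-bar in k..k+m-1. *)
Record dynprog (Sigma : finType) (C : Type) := DynProg {
  dp_aux : finType;
  dp_arity : dp_aux -> nat;
  dp_Q : dp_aux;
  dp_upd : C -> dp_aux -> formula Sigma dp_aux }.

Definition nullary_prog (Sigma : finType) (C : Type) (P : dynprog Sigma C) : Prop :=
  forall T : dp_aux P, @dp_arity _ _ P T = 0.

Section Run.
Variables (Sigma : finType) (C : Type) (Delta : C -> rquery Sigma)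
          (P : dynprog Sigma C) (n : nat).

Definition pstate := (instate n Sigma * auxstate n (dp_aux P))%type.

Definition init_state : pstate := (fun _ _ => false, fun _ _ => false).

Definition step (st : pstate) (ch : C * seq 'I_n.+1) : pstate :=
  let: (J, X) := st in
  let: (c, ps) := ch in
  (apply_rquery (Delta c) ps J,
   fun T bs => (size bs == @dp_arity _ _ P T) && eval J X (@dp_upd _ _ P c T) (env_of (ps ++ bs))).

End Run.

Definition maintains (Sigma : finType) (C : Type) (Delta : C -> rquery Sigma)
  (P : dynprog Sigma C) (q : forall n, instate n Sigma -> bool) : Prop :=
  forall n (chs : seq (C * seq 'I_n.+1)),
    (0 < size chs)%N ->
    all (fun ch => size ch.2 == rq_arity (Delta ch.1)) chs ->
    all (fun st => valid_string st.1) (scanl (@step _ _ Delta P n) (@init_state _ _ P n) chs) ->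
    (foldl (@step _ _ Delta P n) (@init_state _ _ P n) chs).2 (@dp_Q _ _ P) [::] = q n (foldl (@step _ _ Delta P n) (@init_state _ _ P n) chs).1.

Definition maintainable_nullary_DynFO (Sigma : finType) (C : Type)
  (Delta : C -> rquery Sigma) (q : forall n, instate n Sigma -> bool) : Prop :=
  exists P : dynprog Sigma C, nullary_prog P /\ maintains Delta P q.

Definition qL (Sigma : finType) (L : seq Sigma -> bool) : forall n, instate n Sigma -> bool :=
  fun n I => L (word_of I).

(* Main.v *)
Require Import Defs.
From mathcomp Require Import all_boot zify.
From Stdlib Require Import Classical.

Fixpoint qd {A : Type} (f : formula unit A) : nat :=
  match f with
  | FNot g => qd g
  | FAnd g h | FOr g h => maxn (qd g) (qd h)
  | FExists _ g | FForall _ g => (qd g).+1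
  | _ => 0
  end.

Lemma ex_max (P : nat -> Prop) b : P 0 ->
  exists x, [/\ x <= b, P x & forall y, y <= b -> P y -> y <= x].
Proof.
move=> P0; elim: b => [|b [x [xb Px Hx]]].
  by exists 0; split => // y; rewrite leqn0 => /eqP ->.
case: (classic (P b.+1)) => Pb.
  by exists b.+1; split.
exists x; split => //; first by apply: leqW.
move=> y; rewrite leq_eqVlt => /orP [/eqP -> //|]; rewrite ltnS => ?; exact: Hx.
Qed.

Lemma ex_min (P : nat -> Prop) d c : (exists c', c' <= c /\ P (d + c')) ->
  exists x, [/\ d <= x, P x & forall y, d <= y -> P y -> x <= y].
Proof.
elim: c => [|c IH] [c' [c'c Pc]].
  move: c'c; rewrite leqn0 => /eqP Ec; subst c'; rewrite addn0 in Pc.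
  by exists d; split.
case: (classic (exists c'', c'' <= c /\ P (d + c''))) => [H|H]; first exact: IH.
exists (d + c'); split => //; first exact: leq_addr.
move=> y dy Py; case: (leqP (d + c') y) => // lt.
exfalso; apply: H; exists (y - d); split; first by lia.
by rewrite subnKC.
Qed.

Lemma minn_disj a b M : minn a M = minn b M -> a = b \/ (M <= a /\ M <= b).
Proof. lia. Qed.
Lemma minn_eqI a b M : a = b \/ (M <= a /\ M <= b) -> minn a M = minn b M.
Proof. lia. Qed.

Set Implicit Arguments.
Section EF.
Variables (A : Type) (N : nat).
Local Notation D := 'I_N.+1.
Definition I0 : instate N unit := fun _ _ => false.
Definition X0 : auxstate N A := fun _ _ => false.

Definition vt (e : nat -> D) t : nat := nat_of_ord (eval_term e t).

Definition sim k (e1 e2 : nat -> D) := forall t u,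
  minn (vt e1 u - vt e1 t) (2^k) = minn (vt e2 u - vt e2 t) (2^k).

Lemma sim_sym k e1 e2 : sim k e1 e2 -> sim k e2 e1.
Proof. by move=> H t u; rewrite H. Qed.

Lemma sim_S k e1 e2 : sim k.+1 e1 e2 -> sim k e1 e2.
Proof.
move=> H t u; have := H t u; rewrite expnS.
have : 0 < 2 ^ k by rewrite expn_gt0.
move: (2^k) => K; lia.
Qed.

Lemma ext k e1 e2 (d1 : D) : sim k.+1 e1 e2 -> exists d2 : D, forall t,
  minn (d1 - vt e1 t) (2^k) = minn (d2 - vt e2 t) (2^k) /\
  minn (vt e1 t - d1) (2^k) = minn (vt e2 t - d2) (2^k).
Proof.
move=> S.
have [l1 [l1d [tl El] Hl]] := ex_max (fun x => exists t, vt e1 t = x) (nat_of_ord d1)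
   (ex_intro _ TMin erefl).
have hmax : exists c', c' <= N - d1 /\ (exists t, vt e1 t = d1 + c').
  exists (N - d1); split => //; exists TMax; rewrite /vt /=.
  have := ltn_ord d1; lia.
have [u1 [u1d [tu Eu] Hu]] := ex_min (fun x => exists t, vt e1 t = x) (nat_of_ord d1) (N - d1) hmax.
have K0 : 0 < 2 ^ k by rewrite expn_gt0.
have S2 : forall t u, minn (vt e1 u - vt e1 t) (2 * 2^k) = minn (vt e2 u - vt e2 t) (2 * 2^k).
  by move=> t u; rewrite -expnS; apply: S.
have Hlu := S2 tl tu. have Hul := S2 tu tl.
have u2N : vt e2 tu < N.+1 by apply: ltn_ord.
move Eu2: (vt e2 tu) u2N Hlu Hul => u2 u2N Hlu Hul.
move El2: (vt e2 tl) Hlu Hul => l2 Hlu Hul.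
rewrite El Eu in Hlu Hul.
set K := 2 ^ k in K0 S2 Hlu Hul *; clearbody K.
pose d2n := if d1 - l1 < K then l2 + (d1 - l1) else if u1 - d1 < K then u2 - (u1 - d1) else l2 + K.
have d2u : d2n <= u2 by rewrite /d2n; case: ltnP => h1; [|case: ltnP => h2]; lia.
exists (Ordinal (leq_ltn_trans d2u u2N)) => t /=.
have Htl := S2 t tl. have Hlt := S2 tl t. have Htu := S2 t tu. have Hut := S2 tu t.
rewrite El Eu Eu2 El2 in Htl Hlt Htu Hut.
have Hl' : vt e1 t <= d1 -> vt e1 t <= l1 := fun h => Hl _ h (ex_intro _ t erefl).
have Hu' : d1 <= vt e1 t -> u1 <= vt e1 t := fun h => Hu _ h (ex_intro _ t erefl).
move: (vt e1 t) (vt e2 t) Htl Hlt Htu Hut Hl' Hu' => v1 v2 Htl Hlt Htu Hut Hl' Hu'.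
have D := fun a b => @minn_disj a b (2 * K).
move/D: Htl => Htl; move/D: Hlt => Hlt; move/D: Htu => Htu; move/D: Hut => Hut; move/D: Hlu => Hlu.
clear Hul S2 D.
rewrite /d2n; split; apply: minn_eqI; case: (leqP v1 d1) => hv.
- have {Hu'} hv' := Hl' hv; have v2l : v2 <= l2 by clear -Hlt hv' K0; case: Hlt; lia.
  case: ltnP => h1; [|case: ltnP => h2].
  + clear -K0 l1d u1d hv hv' v2l h1 Htl; case: Htl; lia.
  + clear -K0 l1d u1d hv hv' v2l h1 h2 Htu Hlu; case: Htu; case: Hlu; lia.
  + clear -K0 l1d u1d hv hv' v2l h1 h2; lia.
- have {Hl'} hv' := Hu' (ltnW hv); have u2v : u2 <= v2 by clear -Htu hv' K0; case: Htu; lia.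
  case: ltnP => h1; [|case: ltnP => h2].
  + clear -K0 l1d u1d hv hv' u2v h1 Hlt Hlu; case: Hlt; case: Hlu; lia.
  + clear -K0 l1d u1d hv hv' u2v h1 h2 Hut Hlu; case: Hut; case: Hlu; lia.
  + clear -K0 l1d u1d hv hv' u2v h1 h2 Hlu; case: Hlu; lia.
- have {Hu'} hv' := Hl' hv; have v2l : v2 <= l2 by clear -Hlt hv' K0; case: Hlt; lia.
  case: ltnP => h1; [|case: ltnP => h2].
  + clear -K0 l1d u1d hv hv' v2l h1 Htl; case: Htl; lia.
  + clear -K0 l1d u1d hv hv' v2l h1 h2 Htu Hlu; case: Htu; case: Hlu; lia.
  + clear -K0 l1d u1d hv hv' v2l h1 h2; lia.
- have {Hl'} hv' := Hu' (ltnW hv); have u2v : u2 <= v2 by clear -Htu hv' K0; case: Htu; lia.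
  case: ltnP => h1; [|case: ltnP => h2].
  + clear -K0 l1d u1d hv hv' u2v h1 Hlt Hlu; case: Hlt; case: Hlu; lia.
  + clear -K0 l1d u1d hv hv' u2v h1 h2 Hut Hlu; case: Hut; case: Hlu; lia.
  + clear -K0 l1d u1d hv hv' u2v h1 h2 Hlu; case: Hlu; lia.
Qed.

Definition isv (t : term) i := if t is TVar j then j == i else false.

Lemma vt_upd e i d t : vt (upd_env e i d) t = if isv t i then nat_of_ord d else vt e t.
Proof. by case: t => //= j; rewrite /vt /= /upd_env; case: eqP. Qed.

Lemma sim_upd k e1 e2 i (d1 : D) : sim k.+1 e1 e2 ->
  exists d2 : D, sim k (upd_env e1 i d1) (upd_env e2 i d2).
Proof.
move=> S; have [d2 H] := ext d1 S; exists d2 => t u.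
rewrite !vt_upd; case: (isv u i); case: (isv t i).
- by rewrite !subnn.
- by case: (H t).
- by case: (H u).
- exact: sim_S.
Qed.

Lemma ef (f : formula unit A) : forall k e1 e2, qd f <= k -> sim k e1 e2 ->
  eval I0 X0 f e1 = eval I0 X0 f e2.
Proof.
have K0 : forall k, 0 < 2 ^ k by move=> k; rewrite expn_gt0.
elim: f => //=.
- move=> t u k e1 e2 _ S; have := S t u; have := S u t; have := K0 k.
  rewrite /vt; move: (2^k) => K.
  move: (eval_term e1 t) (eval_term e1 u) (eval_term e2 t) (eval_term e2 u) => a b c d.
  move=> K0' H1 H2; apply/eqP/eqP => E.
  + apply: ord_inj; move: E => /(congr1 (@nat_of_ord _)) E; lia.
  + apply: ord_inj; move: E => /(congr1 (@nat_of_ord _)) E; lia.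
- move=> t u k e1 e2 _ S; have := S t u; have := S u t; have := K0 k.
  rewrite /vt; move: (2^k) => K.
  move: (eval_term e1 t) (eval_term e1 u) (eval_term e2 t) (eval_term e2 u) => a b c d.
  move=> K0' H1 H2; apply/idP/idP => E; lia.
- by move=> g IH k e1 e2 H S; rewrite (IH k e1 e2).
- move=> g IHg h IHh k e1 e2 H S; rewrite geq_max in H; case/andP: H => H1 H2.
  by rewrite (IHg k e1 e2) // (IHh k e1 e2).
- move=> g IHg h IHh k e1 e2 H S; rewrite geq_max in H; case/andP: H => H1 H2.
  by rewrite (IHg k e1 e2) // (IHh k e1 e2).
- move=> i g IH [|k] e1 e2 //= H S.
  apply/existsP/existsP => [[d1 Hd]|[d2 Hd]].
  + have [d2 S'] := sim_upd i d1 S; exists d2; by rewrite -(IH k _ _ H S').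
  + have [d1 S'] := sim_upd i d2 (sim_sym S); exists d1; by rewrite (IH k _ _ H (sim_sym S')).
- move=> i g IH [|k] e1 e2 //= H S.
  apply/forallP/forallP => [Hd d2|Hd d1].
  + have [d1 S'] := sim_upd i d2 (sim_sym S); by rewrite -(IH k _ _ H (sim_sym S')).
  + have [d2 S'] := sim_upd i d1 S; by rewrite (IH k _ _ H S').
Qed.
End EF.

Unset Implicit Arguments.

Lemma valid_unit n (I : instate n unit) : valid_string I.
Proof.
apply/forallP => d; apply/forallP => [[]]; apply/forallP => [[]].
by apply/implyP => _; apply/implyP.
Qed.

Lemma size_word n (I : instate n unit) :
  size (word_of I) = count (I tt) (enum 'I_n.+1).
Proof.
rewrite /word_of; elim: (enum 'I_n.+1) => //= i s IH; rewrite size_cat IH.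
have -> : enum (unit : finType) = [:: tt] by rewrite enumT unlock.
by rewrite /=; case: (I tt i).
Qed.

Lemma count_upd (T : eqType) (a a' : pred T) p (s : seq T) :
  (forall x, x != p -> a' x = a x) ->
  count a' s + count (pred1 p) s * a p = count a s + count (pred1 p) s * a' p.
Proof.
move=> H; elim: s => //= x s IH.
case: (eqVneq x p) => [->|ne].
  move: IH; case: (a p); case: (a' p); rewrite /=; lia.
rewrite H //; move: IH; case: (a x); case: (a p); case: (a' p); rewrite /=; lia.
Qed.

Lemma count_enum1 N (p : 'I_N.+1) : count (pred1 p) (enum 'I_N.+1) = 1.
Proof. by rewrite count_uniq_mem ?enum_uniq // mem_enum. Qed.

Lemma count_iota_le N p : count (fun x => x <= p) (iota 0 N) = minn N p.+1.
Proof.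
elim: N => // N IH; rewrite -addn1 iotaD count_cat IH /=.
case: leqP => h; lia.
Qed.

Lemma count_le_p N (p : 'I_N.+1) :
  count (fun d : 'I_N.+1 => (nat_of_ord d < nat_of_ord p) || (d == p)) (enum 'I_N.+1) = p.+1.
Proof.
have E : (fun d : 'I_N.+1 => (nat_of_ord d < nat_of_ord p) || (d == p)) =1
          preim (@nat_of_ord _) (fun x => x <= p).
  move=> d /=; rewrite [X in _ = X]leq_eqVlt orbC; congr (_ || _).
rewrite (eq_count E).
rewrite -count_map val_enum_ord count_iota_le.
have := ltn_ord p; lia.
Qed.

Definition xorF (g h : formula unit unit) : formula unit unit :=
  FOr (FAnd g (FNot h)) (FAnd (FNot g) h).

Definition progA : dynprog unit (unit * bool) :=
  @DynProg unit (unit * bool) unit (fun _ => 0) tt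
    (fun c _ => if c.2 then xorF (FAux tt [::]) (FNot (FIn tt (TVar 0)))
                else xorF (FAux tt [::]) (FIn tt (TVar 0))).

Lemma invA n (chs : seq ((unit * bool) * seq 'I_n.+1)) (st : pstate progA n) :
  all (fun ch => size ch.2 == rq_arity (@delta_sigma unit ch.1)) chs ->
  st.2 tt [::] = odd (count (st.1 tt) (enum 'I_n.+1)) ->
  (foldl (@step _ _ (@delta_sigma unit) progA n) st chs).2 tt [::]
  = odd (count ((foldl (@step _ _ (@delta_sigma unit) progA n) st chs).1 tt) (enum 'I_n.+1)).
Proof.
elim: chs st => //= [[[[] ins] ps] chs] IH [J X] /andP [Hs Ha] Hst.
apply: IH => //.
case: ps Hs => [|p [|]] //= _.
rewrite /= in Hst.
case: ins.
- set J' := apply_rquery _ _ _ tt.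
  have Hc := @count_upd _ (J tt) J' p (enum 'I_n.+1).
  rewrite count_enum1 !mul1n in Hc.
  have HJ' : J' p = true by rewrite /J' /apply_rquery /= eqxx orbT.
  have Hc' : count J' (enum 'I_n.+1) + J tt p = count (J tt) (enum 'I_n.+1) + J' p.
    apply: Hc => x nx; rewrite /J' /apply_rquery /= (negbTE nx) orbF //.
  rewrite HJ' in Hc'.
  have -> : count J' (enum 'I_n.+1) = count (J tt) (enum 'I_n.+1) + ~~ J tt p.
    by move: Hc'; case: (J tt p) => /=; lia.
  by rewrite /= oddD -Hst; case: (X tt [::]); case: (J tt p).
- set J' := apply_rquery _ _ _ tt.
  have Hc := @count_upd _ (J tt) J' p (enum 'I_n.+1).
  rewrite count_enum1 !mul1n in Hc.
  have HJ' : J' p = false by rewrite /J' /apply_rquery /= eqxx andbF.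
  have Hc' : count J' (enum 'I_n.+1) + J tt p = count (J tt) (enum 'I_n.+1) + J' p.
    apply: Hc => x nx; rewrite /J' /apply_rquery /= (negbTE nx) andbT //.
  rewrite HJ' addn0 in Hc'.
  rewrite -Hc' in Hst.
  by rewrite /= Hst oddD; case: (J tt p); case: (odd _).
Qed.

Definition rhoU : rquery unit :=
  @RQuery unit 1 (fun _ => Some (FOr (FLt (TVar 1) (TVar 0)) (FEq (TVar 1) (TVar 0)))).

Definition LU (w : seq unit) : bool := odd (size w).

Lemma LU_regular : regular LU.
Proof.
exists (@DFA unit (bool : finType) false id (fun b _ => ~~ b)) => w.
rewrite /dfa_accepts /LU /=.
suff H : forall b, foldl (fun b _ => ~~ b) b w = b (+) odd (size w) by rewrite H.
elim: w => //= [b|x w IH b]; first by rewrite addbF.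
by rewrite IH; case: b; case: (odd _).
Qed.

Lemma partA : maintainable_nullary_DynFO (@delta_sigma unit) (qL LU).
Proof.
exists progA; split => // n chs _ Ha _.
rewrite /qL /LU size_word; apply: invA => //=.
by rewrite count_pred0.
Qed.

Lemma partB : ~ maintainable_nullary_DynFO (delta_sigma_plus rhoU) (qL LU).
Proof.
move=> [P [nul M]]; rewrite /maintains in M.
set f := @dp_upd _ _ P None (@dp_Q _ _ P).
set k := qd f.
have K0 : 0 < 2 ^ k by rewrite expn_gt0.
move EK: (2 ^ k) K0 => K K0.
pose n := 4 * K.
have Hq : forall p : 'I_n.+1, eval (@I0 n) (@X0 (dp_aux P) n) f (env_of [:: p]) = odd p.+1.
  move=> p.
  have := M n [:: (None, [:: p])] erefl erefl.
  rewrite /= !valid_unit => /(_ erefl).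
  rewrite /= nul /= /qL /LU size_word.
  move=> ->.
  transitivity (odd p.+1); last by [].
  congr (odd _).
  have E : apply_rquery rhoU [:: p] (fun _ _ => false) tt =1
           (fun d : 'I_n.+1 => (nat_of_ord d < nat_of_ord p) || (d == p)) by [].
  rewrite (eq_count E); exact: count_le_p.
have h1 : 2 * K < n.+1 by rewrite /n; lia.
have h2 : (2 * K).+1 < n.+1 by rewrite /n; lia.
have := Hq (Ordinal h1); have := Hq (Ordinal h2).
rewrite (@ef _ _ f k (env_of [:: Ordinal h1]) (env_of [:: Ordinal h2])) //.
  by move=> -> /=; case: (odd _).
move=> t u; rewrite /sim EK.
have Ht : forall t, (vt (env_of [:: Ordinal h1]) t = 2 * K /\ vt (env_of [:: Ordinal h2]) t = (2 * K).+1)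
  \/ (vt (env_of [:: Ordinal h1]) t = 0 /\ vt (env_of [:: Ordinal h2]) t = 0)
  \/ (vt (env_of [:: Ordinal h1]) t = n /\ vt (env_of [:: Ordinal h2]) t = n).
  by case => [[|j]||]; rewrite /vt /env_of /= ?nth_nil; auto.
case: (Ht t) => [[-> ->]|[[-> ->]|[-> ->]]]; case: (Ht u) => [[-> ->]|[[-> ->]|[-> ->]]]; rewrite /n; lia.
Qed.

Theorem theorem7p4 :
  exists (Sigma : finType) (L : seq Sigma -> bool) (rho : rquery Sigma),
    regular L /\ string_preserving rho /\
    maintainable_nullary_DynFO (@delta_sigma Sigma) (qL L) /\
    ~ maintainable_nullary_DynFO (delta_sigma_plus rho) (qL L).
Proof.
exists (unit : finType), LU, rhoU; split; first exact: LU_regular.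
split; first by move=> n I ps _ _; apply: valid_unit.
split; [exact: partA | exact: partB].
Qed.
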